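(* Let $r\in\mathfrak{b}$ have pairwise distinct diagonal entries, let $b_{11},\dots,b_{nn}\in\mathbb{C}^*$ and $b=\sum_{\iota}E_{\iota\iota}\operatorname{diag}(b_{11},\dots,b_{nn})L^\iota(r)$. Then for every $s\in\mathfrak{b}^*$ and every $\iota$, $(bsb^{-1})_{\iota\iota}=\operatorname{tr}(L^\iota(r)s)$.
   Context: $\mathfrak{b}$: upper triangular complex $n\times n$ matrices; $\mathfrak{b}^*=\mathfrak{gl}_n/\mathfrak{n}^+$ with $\mathfrak{n}^+$ the strictly upper triangular matrices (diagonal entries of $bsb^{-1}$ and $\operatorname{tr}(L^\iota s)$ are well defined on this quotient since $b$ and $L^\iota$ are upper triangular). $E_{\iota\iota}$ is the matrix unit; $L^\iota(r)=\big[\operatorname{tr}\prod_{k\ne\iota}(r-r_{kk}I)\big]^{-1}\prod_{k\ne\iota}(r-r_{kk}I)$. The matrix $b$ is invertible upper triangular and satisfies $brb^{-1}=\operatorname{diag}(r)$. *)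

(* Defs.v *)
From HB Require Import structures.
From mathcomp Require Import all_boot all_order all_algebra.
From mathcomp Require Import complex.
From mathcomp Require Import reals.
Set Implicit Arguments. Unset Strict Implicit. Unset Printing Implicit Defensive.
Import Order.TTheory GRing.Theory Num.Theory.
Local Open Scope ring_scope.

Section Defs.
Variable (F : fieldType) (n : nat).

Definition upper_mx (A : 'M[F]_n) : Prop :=
  forall i j : 'I_n, (j < i)%N -> A i j = 0.

Definition Lnum (r : 'M[F]_n) (iota : 'I_n) : 'M[F]_n :=
  \prod_(k < n | k != iota) (r - (r k k)%:M).

Definition Lmx (r : 'M[F]_n) (iota : 'I_n) : 'M[F]_n :=
  (\tr (Lnum r iota))^-1 *: Lnum r iota.

Definition bmx (r : 'M[F]_n) (d : 'rV[F]_n) : 'M[F]_n :=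
  \sum_(iota < n) (delta_mx iota iota *m diag_mx d *m Lmx r iota).

End Defs.

(* Main.v *)
Require Import Defs.
From HB Require Import structures.
From mathcomp Require Import all_boot all_order all_algebra.
From mathcomp Require Import complex.
From mathcomp Require Import reals.
From mathcomp Require Import zify ring.
Import Order.TTheory GRing.Theory Num.Theory.
Local Open Scope ring_scope.
Set Implicit Arguments. Unset Strict Implicit.

Section S.
Variable (F : fieldType) (n : nat).
Implicit Types A B : 'M[F]_n.+1.

Lemma upperM A B : upper_mx A -> upper_mx B ->
  upper_mx (A *m B) /\ forall j, (A *m B) j j = A j j * B j j.
Proof.
move=> hA hB; split.
  move=> i j lt; rewrite mxE big1 // => k _.
  case: (ltnP k i) => h; first by rewrite hA // mul0r.
  by rewrite hB ?mulr0 //; apply: leq_trans lt h.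
move=> j; rewrite mxE (bigD1 j) //= big1 ?addr0 // => k nk.
case: (ltngtP k j) => h; first by rewrite hA // mul0r.
  by rewrite hB ?mulr0.
by case/eqP: nk; apply: val_inj.
Qed.

Lemma horner_upper (r : 'M[F]_n.+1) (p : {poly F}) : upper_mx r ->
  upper_mx (horner_mx r p) /\ forall j, horner_mx r p j j = p.[r j j].
Proof.
move=> hr; elim/poly_ind: p => [|p c [IHu IHd]].
  by rewrite rmorph0; split => [i j _|j]; rewrite ?mxE ?horner0.
rewrite rmorphD rmorphM /= horner_mx_X horner_mx_C -mulmxE.
have [hu hd] := upperM IHu hr.
split => [i j lt|j].
  rewrite mxE hu // mxE add0r; case: eqP => [e|]; last by rewrite mulr0n.
  by move: lt; rewrite e ltnn.
by rewrite mxE hd IHd mxE eqxx mulr1n !hornerE.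
Qed.

Lemma horner_trmx A (p : {poly F}) : horner_mx A^T p = (horner_mx A p)^T.
Proof.
elim/poly_ind: p => [|p c IH]; first by rewrite !rmorph0 trmx0.
have cA : horner_mx A p * A = A * horner_mx A p.
  transitivity (horner_mx A (p * 'X)); first by rewrite rmorphM /= horner_mx_X.
  by rewrite mulrC rmorphM /= horner_mx_X.
rewrite !rmorphD !rmorphM /= !horner_mx_X !horner_mx_C IH cA linearD /= -!mulmxE trmx_mul.
by rewrite tr_scalar_mx.
Qed.

Variable (r : 'M[F]_n.+1).
Hypothesis hr : upper_mx r.
Hypothesis hd : forall k l : 'I_n.+1, k != l -> r k k != r l l.

Definition qq (i : 'I_n.+1) : {poly F} := \prod_(k < n.+1 | k != i) ('X - (r k k)%:P).
Definition QQ : {poly F} := \prod_(k < n.+1) ('X - (r k k)%:P).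
Definition cc (i : 'I_n.+1) : F := \prod_(k < n.+1 | k != i) (r i i - r k k).

Lemma QQ0 : horner_mx r QQ = 0.
Proof.
have trig : is_trig_mx r^T by apply/is_trig_mxP => i j lt; rewrite mxE hr.
have := Cayley_Hamilton r^T; rewrite char_poly_trig // horner_trmx.
have -> : \prod_(i < n.+1) ('X - (r^T i i)%:P) = QQ.
  by apply: eq_bigr => i _; rewrite mxE.
by move=> /(congr1 trmx); rewrite trmxK trmx0.
Qed.

Lemma Lnum_h i : Lnum r i = horner_mx r (qq i).
Proof.
by rewrite /Lnum /qq rmorph_prod; apply: eq_bigr => k _; rewrite rmorphB /= horner_mx_X horner_mx_C.
Qed.

Lemma QQ_split i : QQ = ('X - (r i i)%:P) * qq i.
Proof. by rewrite /QQ (bigD1 i). Qed.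

Lemma cc_neq0 i : cc i != 0.
Proof. by apply/prodf_neq0 => k nk; rewrite subr_eq0 hd // eq_sym. Qed.

Lemma Lnum_diag i j : Lnum r i j j = if j == i then cc i else 0.
Proof.
rewrite Lnum_h (proj2 (horner_upper _ hr)) horner_prod.
case: eqP => [->|/eqP nj]; first by apply: eq_bigr => k _; rewrite !hornerE.
by rewrite (bigD1 j) //= !hornerE subrr mul0r.
Qed.

Lemma trL i : \tr (Lnum r i) = cc i.
Proof.
rewrite /mxtrace (bigD1 i) //= Lnum_diag eqxx big1 ?addr0 // => j nj.
by rewrite Lnum_diag (negbTE nj).
Qed.

Lemma Lmx_E i : Lmx r i = (cc i)^-1 *: horner_mx r (qq i).
Proof. by rewrite /Lmx trL Lnum_h. Qed.

Lemma Lmx_upper i : upper_mx (Lmx r i).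
Proof.
by move=> k j lt; rewrite Lmx_E mxE (proj1 (horner_upper _ hr)) // mulr0.
Qed.

Lemma Lmx_ii i : Lmx r i i i = 1.
Proof. by rewrite /Lmx trL mxE Lnum_diag eqxx mulVf // cc_neq0. Qed.

Lemma annih i : (r - (r i i)%:M) *m Lmx r i = 0.
Proof.
have h : r - (r i i)%:M = horner_mx r ('X - (r i i)%:P).
  by rewrite rmorphB /= horner_mx_X horner_mx_C.
rewrite Lmx_E -scalemxAr mulmxE h -rmorphM /=.
by rewrite -QQ_split QQ0 scaler0.
Qed.

Lemma orth i j : j != i -> Lmx r i *m Lmx r j = 0.
Proof.
move=> ji; rewrite !Lmx_E -scalemxAr -scalemxAl mulmxE -rmorphM /=.
rewrite {1}/qq (bigD1 j) //= (mulrC ('X - _)) -mulrA -QQ_split.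
by rewrite rmorphM /= QQ0 mulr0 !scaler0.
Qed.

Lemma uniq_kernel i (v : 'cV[F]_n.+1) :
  (r - (r i i)%:M) *m v = 0 -> v i 0 = 0 -> forall k, v k 0 = 0.
Proof.
move=> hv vi.
suff H : forall t (k : 'I_n.+1), (n.+1 - t <= k)%N -> v k 0 = 0.
  by move=> k; apply: (H n.+1); rewrite subnn.
elim=> [|t IH] k hk.
  by move: hk (ltn_ord k); rewrite subn0 => h1 h2; lia.
have := congr1 (fun M : 'cV[F]_n.+1 => M k 0) hv; rewrite !mxE (bigD1 k) //= big1.
  rewrite addr0 !mxE eqxx mulr1n => /eqP; rewrite mulf_eq0 subr_eq0.
  case/orP=> [/eqP e|/eqP //].
  case: (eqVneq k i) => [->//|nk]; by have := hd nk; rewrite e eqxx.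
move=> m nm; case: (ltngtP m k) => h.
- rewrite !mxE (hr h) eq_sym (negbTE nm).
  by rewrite mulr0n subr0 mul0r.
- by rewrite IH ?mulr0 //; lia.
- by case/eqP: nm; apply: val_inj.
Qed.

Lemma rank1 i k j : Lmx r i k j = Lmx r i k i * Lmx r i i j.
Proof.
set P := Lmx r i.
have h1 : (r - (r i i)%:M) *m (col j P - P i j *: col i P) = 0.
  by rewrite mulmxBr -scalemxAr !colE !mulmxA annih !mul0mx scaler0 subrr.
have Pii : P i i = 1 by exact: Lmx_ii.
clearbody P.
have h2 : (col j P - P i j *: col i P) i 0 = 0.
  by rewrite !mxE Pii mulr1 subrr.
by have := uniq_kernel h1 h2 k; rewrite !mxE => /eqP; rewrite subr_eq0 mulrC => /eqP.
Qed.

Variable (d : 'rV[F]_n.+1).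
Hypothesis hdz : forall k, d 0 k != 0.

Lemma delta_entry (M : 'M[F]_n.+1) k a c :
  (delta_mx k k *m M) a c = (a == k)%:R * M k c.
Proof.
rewrite mxE (bigD1 k) //= big1 => [|m nm]; first by rewrite mxE eqxx andbT addr0.
by rewrite mxE (negbTE nm) andbF mul0r.
Qed.

Lemma bmx_E : bmx r d = \matrix_(a, c) (d 0 a * Lmx r a a c).
Proof.
apply/matrixP => a c; rewrite summxE (bigD1 a) //= big1 => [|k nk].
  by rewrite -mulmxA mul_diag_mx delta_entry eqxx mul1r !mxE addr0.
by rewrite -mulmxA delta_entry eq_sym (negbTE nk) mul0r.
Qed.


Definition Xmx : 'M[F]_n.+1 := \matrix_(a, c) (Lmx r c a c / d 0 c).

Lemma bX : bmx r d *m Xmx = 1%:M.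
Proof.
apply/matrixP => a c; rewrite bmx_E !mxE.
rewrite (eq_bigr (fun m => d 0 a / d 0 c * (Lmx r a a m * Lmx r c m c))) => [|m _]; last first.
  by rewrite !mxE; ring.
rewrite -mulr_sumr.
have -> : \sum_m Lmx r a a m * Lmx r c m c = (Lmx r a *m Lmx r c) a c by rewrite mxE.
case: (eqVneq a c) => [<-|nac].
  rewrite (proj2 (upperM (Lmx_upper a) (Lmx_upper a))) Lmx_ii mulr1 divff //.
  by rewrite mulr1.
by rewrite orth 1?eq_sym // mxE mulr0.
Qed.

Lemma calc (B X s P : 'M[F]_n.+1) (x : F) i : x != 0 ->
  (forall a, B i a = x * P i a) -> (forall c, X c i = P c i / x) ->
  (forall k j, P k j = P k i * P i j) -> (B *m s *m X) i i = \tr (P *m s).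
Proof.
move=> hx hB hX hP.
rewrite /mxtrace !mxE; apply: eq_bigr => c _.
rewrite !mxE mulr_suml; apply: eq_bigr => a _.
by rewrite hB hX (hP c a); field.
Qed.

Lemma main_gen (s : 'M[F]_n.+1) (i : 'I_n.+1) :
  (bmx r d *m s *m invmx (bmx r d)) i i = \tr (Lmx r i *m s).
Proof.
have [bu _] := mulmx1_unit bX.
have -> : invmx (bmx r d) = Xmx.
  by rewrite -[invmx _]mulmx1 -bX mulmxA mulVmx // mul1mx.
apply: (@calc (bmx r d) Xmx s (Lmx r i) (d 0 i) i (hdz i)) => [a|c|k j]; first by rewrite bmx_E mxE.
  by rewrite /Xmx mxE.
exact: rank1.
Qed.
End S.

Lemma main_all (F : fieldType) (n : nat) (r : 'M[F]_n) (d : 'rV[F]_n) :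
  upper_mx r ->
  (forall k l : 'I_n, k != l -> r k k != r l l) ->
  (forall k : 'I_n, d 0 k != 0) ->
  forall (s : 'M[F]_n) (iota : 'I_n),
    (bmx r d *m s *m invmx (bmx r d)) iota iota = \tr (Lmx r iota *m s).
Proof.
case: n r d => [|n] r d hr hd hdz s i; first by case: i.
exact: main_gen.
Qed.

Local Open Scope complex_scope.

Theorem mainTheorem17 (R : realType) (n : nat) (r : 'M[R[i]]_n) (d : 'rV[R[i]]_n) :
  upper_mx r ->
  (forall k l : 'I_n, k != l -> r k k != r l l) ->
  (forall k : 'I_n, d 0 k != 0) ->
  forall (s : 'M[R[i]]_n) (iota : 'I_n),
    (bmx r d *m s *m invmx (bmx r d)) iota iota = \tr (Lmx r iota *m s).
Proof. exact: main_all. Qed.
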